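(* For every directed graph $G=(V,E)$ and every state $\mathcal{S}$ with no red nodes, the set function $A\mapsto\mathcal{F}_{\mathcal{S}}(A)$ on subsets $A\subseteq V\setminus\mathcal{S}^b$ is monotonically increasing (i.e. $\mathcal{F}_{\mathcal{S}}(A)\le\mathcal{F}_{\mathcal{S}}(A\cup\{v\})$) and submodular (i.e. for all $A\subseteq A'\subseteq V\setminus\mathcal{S}^b$ and $v\in V\setminus\mathcal{S}^b$, $\mathcal{F}_{\mathcal{S}}(A'\cup\{v\})-\mathcal{F}_{\mathcal{S}}(A')\le\mathcal{F}_{\mathcal{S}}(A\cup\{v\})-\mathcal{F}_{\mathcal{S}}(A)$).
   Context: A state is a map $\mathcal{S}:V\to\{b,r,u\}$ (blue, red, uncolored); colored means blue or red; $\mathcal{S}^b$ is the set of blue nodes. The \textsc{Random Pick} process from an initial state $\mathcal{S}_0$: in each round $t=1,2,\dots$, every node $v$ with at least one out-neighbor picks an out-neighbor $ps_t(v)$ uniformly at random, independently of all other picks; $\mathcal{S}_t(v)=\mathcal{S}_{t-1}(ps_t(v))$ if $\mathcal{S}_{t-1}(v)=u$ and $\mathcal{S}_{t-1}(ps_t(v))\ne u$, else $\mathcal{S}_t(v)=\mathcal{S}_{t-1}(v)$. It almost surely reaches a stable state (no uncolored node has a colored out-neighbor). For a state $\mathcal{S}$ with no red nodes and $A\subseteq V\setminus\mathcal{S}^b$, $\mathcal{F}_{\mathcal{S}}(A)$ is the expected number of red nodes in the final stable state of the process started from $\mathcal{S}$ with all nodes of $A$ recolored red. *)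

(* Defs.v *)
From HB Require Import structures.
From mathcomp Require Import all_boot all_order all_algebra.
From mathcomp Require Import all_classical all_reals all_analysis.
Set Implicit Arguments. Unset Strict Implicit. Unset Printing Implicit Defensive.
Import Order.TTheory GRing.Theory Num.Theory numFieldNormedType.Exports.
Local Open Scope ring_scope.

Definition color := option bool.
Definition blue : color := Some true.
Definition red : color := Some false.
Definition uncol : color := None.

Section RandomPick.
Variables (R : realType) (V : finType) (E : rel V).
(* A directed graph on the finite vertex set V: E v w means an arc v -> w. *)

Definition state := {ffun V -> color}.

Definition outdeg (v : V) : nat := #|[set w | E v w]|.

(* Probability that the (independent, uniform) picks of one round equal p.
   Nodes without out-neighbours do not pick; we encode this by a dummy
   deterministic pick p v = v, which (see [step]) has no effect. *)
Definition pick_prob (p : {ffun V -> V}) : R :=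
  \prod_(v : V)
    (if (0 < outdeg v)%N
     then (if E v (p v) then (outdeg v)%:R^-1 else 0)
     else (if p v == v then 1 else 0)).

Definition step (S : state) (p : {ffun V -> V}) : state :=
  [ffun v => if (S v == uncol) && (0 < outdeg v)%N && (S (p v) != uncol)
             then S (p v) else S v].

Definition trans (S S' : state) : R :=
  \sum_(p : {ffun V -> V}) pick_prob p * (step S p == S')%:R.

Fixpoint dist (S0 : state) (t : nat) (S : state) : R :=
  match t with
  | 0 => (S == S0)%:R
  | t'.+1 => \sum_(S1 : state) dist S0 t' S1 * trans S1 S
  end.

Definition stable (S : state) : bool :=
  [forall v, [forall w, (S v == uncol) && E v w ==> (S w == uncol)]].

Definition blues (S : state) : {set V} := [set v | S v == blue].
Definition reds (S : state) : {set V} := [set v | S v == red].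

(* Probability that the final stable state is X (for X stable, the event
   {S_t = X} is increasing in t and its union is {final state = X}). *)
Definition final_prob (S0 X : state) : R := limn (fun t => dist S0 t X).

Definition expected_final_reds (S0 : state) : R :=
  \sum_(X : state | stable X) #|reds X|%:R * final_prob S0 X.

Definition recolor_red (S : state) (A : {set V}) : state :=
  [ffun v => if v \in A then red else S v].

Definition F (S : state) (A : {set V}) : R :=
  expected_final_reds (recolor_red S A).

End RandomPick.

(* Main.v *)
Require Import Defs.
From HB Require Import structures.
From mathcomp Require Import all_boot all_order all_algebra.
From mathcomp Require Import all_classical all_reals all_analysis.
From mathcomp Require Import lra.
Import Order.TTheory GRing.Theory Num.Theory numFieldNormedType.Exports.
Local Open Scope ring_scope.
Set Implicit Arguments. Unset Strict Implicit. Unset Printing Implicit Defensive.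

Section Proofs.
Variables (R : realType) (V : finType) (E : rel V).

Definition fac (v w : V) : R :=
  if (0 < outdeg E v)%N then (if E v w then (outdeg E v)%:R^-1 else 0)
  else (if w == v then 1 else 0).

Lemma fac_ge0 v w : 0 <= fac v w.
Proof. rewrite /fac; case: ifP => _; case: ifP => _ //; by rewrite invr_ge0. Qed.

Lemma ppE p : pick_prob R E p = \prod_v fac v (p v).
Proof. by []. Qed.

Lemma pp_ge0 p : 0 <= pick_prob R E p.
Proof. rewrite ppE; apply: prodr_ge0 => v _; exact: fac_ge0. Qed.

Lemma sum_fac v : \sum_w fac v w = 1.
Proof.
rewrite /fac; case hd: (0 < outdeg E v)%N.
  transitivity (\sum_(w | E v w) (outdeg E v)%:R^-1 : R); first by rewrite [RHS]big_mkcond.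
  rewrite sumr_const.
  have -> : #|[pred w | E v w]| = outdeg E v by rewrite /outdeg cardsE.
  by rewrite -[_ *+ outdeg E v]mulr_natr mulVf // pnatr_eq0 -lt0n hd.
transitivity (\sum_(w | w == v) (1 : R)); first by rewrite [RHS]big_mkcond.
by rewrite big_pred1_eq.
Qed.

Lemma sum_pp : \sum_p pick_prob R E p = 1.
Proof.
under eq_bigr do rewrite ppE.
rewrite -(bigA_distr_bigA (fun v w => fac v w)) /=.
by rewrite big1 // => v _; exact: sum_fac.
Qed.

Lemma pp_neq0 p v : pick_prob R E p != 0 -> (0 < outdeg E v)%N -> E v (p v).
Proof.
move=> H hd; move: H; rewrite ppE (bigD1 v) //= /fac hd.
by case: (E v (p v)) => //; rewrite mul0r eqxx.
Qed.


Lemma sum_eq1 (T : finType) (x : T) : \sum_(y : T) ((x == y)%:R : R) = 1.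
Proof.
rewrite (bigD1 x) //= eqxx big1 ?addr0 // => y /negbTE.
by rewrite eq_sym => ->.
Qed.

Lemma sum_eq1' (T : finType) (x : T) (f : T -> R) : \sum_(y : T) (y == x)%:R * f y = f x.
Proof.
rewrite (bigD1 x) //= eqxx mul1r big1 ?addr0 // => y /negbTE -> .
by rewrite mul0r.
Qed.

Lemma trans_ge0 S S' : 0 <= trans R E S S'.
Proof. apply: sumr_ge0 => p _; apply: mulr_ge0; [exact: pp_ge0|exact: ler0n]. Qed.

Lemma sum_trans S : \sum_Y trans R E S Y = 1.
Proof.
rewrite /trans exchange_big /=.
under eq_bigr do rewrite -mulr_sumr sum_eq1 mulr1.
exact: sum_pp.
Qed.

Lemma dist_ge0 S t X : 0 <= dist R E S t X.
Proof.
elim: t X => [|t IH] X /=; first exact: ler0n.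
apply: sumr_ge0 => Y _; apply: mulr_ge0 => //; exact: trans_ge0.
Qed.

Lemma sum_dist S t : \sum_Y dist R E S t Y = 1.
Proof.
elim: t => [|t IH] /=.
  by under eq_bigr do rewrite eq_sym; rewrite sum_eq1.
rewrite exchange_big /=.
by under eq_bigr do rewrite -mulr_sumr sum_trans mulr1.
Qed.

Lemma dist_back S t X :
  dist R E S t.+1 X = \sum_p pick_prob R E p * dist R E (step E S p) t X.
Proof.
elim: t X => [|t IH] X.
  rewrite /= sum_eq1' /trans; apply: eq_bigr => p _.
  by rewrite eq_sym.
have -> : dist R E S t.+2 X = \sum_S1 dist R E S t.+1 S1 * trans R E S1 X by [].
under eq_bigr do rewrite IH mulr_suml.
rewrite exchange_big /=; apply: eq_bigr => p _.
by rewrite /= mulr_sumr; apply: eq_bigr => Y _; rewrite mulrA.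
Qed.

Lemma dist_CK S t m Y :
  dist R E S (t + m) Y = \sum_X dist R E S t X * dist R E X m Y.
Proof.
elim: m Y => [|m IH] Y.
  rewrite addn0 /=.
  rewrite (bigD1 Y) //= eqxx mulr1 big1 ?addr0 // => X /negbTE.
  by rewrite eq_sym => ->; rewrite mulr0.
rewrite addnS.
have -> : dist R E S (t + m).+1 Y = \sum_Z dist R E S (t + m) Z * trans R E Z Y by [].
under eq_bigr do rewrite IH mulr_suml.
rewrite exchange_big /=; apply: eq_bigr => X _.
by rewrite mulr_sumr; apply: eq_bigr => Z _; rewrite mulrA.
Qed.

Definition W (g : state V -> R) t S := \sum_X dist R E S t X * g X.

Lemma W0 g S : W g 0 S = g S.
Proof. by rewrite /W /= sum_eq1'. Qed.

Lemma W_back g t S :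
  W g t.+1 S = \sum_p pick_prob R E p * W g t (step E S p).
Proof.
rewrite /W; under eq_bigr do rewrite dist_back mulr_suml.
rewrite exchange_big /=; apply: eq_bigr => p _.
by rewrite mulr_sumr; apply: eq_bigr => X _; rewrite mulrA.
Qed.


Definition stepc (a : color) (b : bool) (c : color) : color :=
  if (a == uncol) && b && (c != uncol) then c else a.

Lemma step_app S p v : step E S p v = stepc (S v) (0 < outdeg E v)%N (S (p v)).
Proof. by rewrite ffunE. Qed.

Definition gr (X : state V) : R := #|reds X|%:R.

Lemma card_reds (X : state V) : #|reds X| = (\sum_v (X v == red))%N.
Proof.
rewrite /reds -sum1_card big_mkcond /=; apply: eq_bigr => v _.
by rewrite inE; case: (X v == red).
Qed.

Lemma W_inv (P : color -> color -> color -> color -> bool)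
 (Pstep : forall a1 a2 a3 a4 c1 c2 c3 c4 b, P a1 a2 a3 a4 -> P c1 c2 c3 c4 ->
    P (stepc a1 b c1) (stepc a2 b c2) (stepc a3 b c3) (stepc a4 b c4))
 (Pg : forall a1 a2 a3 a4, P a1 a2 a3 a4 ->
    ((a4 == red) + (a1 == red) <= (a2 == red) + (a3 == red))%N) t :
 forall S1 S2 S3 S4 : state V, (forall v, P (S1 v) (S2 v) (S3 v) (S4 v)) ->
 W gr t S4 + W gr t S1 <= W gr t S2 + W gr t S3.
Proof.
elim: t => [|t IH] S1 S2 S3 S4 HP.
  rewrite !W0 /gr -!natrD ler_nat !card_reds -!big_split /=.
  by apply: leq_sum => v _; apply: Pg.
rewrite !W_back -!big_split /=; apply: ler_sum => p _.
rewrite -!mulrDr; apply: ler_wpM2l; first exact: pp_ge0.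
apply: IH => v; rewrite !step_app; exact: Pstep.
Qed.

Definition monc (a b : color) : bool :=
  match a, b with
  | Some false, Some false => true
  | Some false, _ => false
  | Some true, Some _ => true
  | Some true, None => false
  | None, Some false => true
  | None, Some true => false
  | None, None => true
  end.

Definition P4 (a1 a2 a3 a4 : color) : bool :=
  [&& monc a1 a2, monc a1 a3, monc a2 a4, monc a3 a4 &
      (a4 == red) ==> (a2 == red) || (a3 == red)].

Definition P2 (a1 a2 a3 a4 : color) : bool :=
  [&& monc a1 a2, a3 == a1 & a4 == a1].

Lemma P4_step a1 a2 a3 a4 c1 c2 c3 c4 b : P4 a1 a2 a3 a4 -> P4 c1 c2 c3 c4 ->
    P4 (stepc a1 b c1) (stepc a2 b c2) (stepc a3 b c3) (stepc a4 b c4).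
Proof.
case: a1 => [[]|]; case: a2 => [[]|]; case: a3 => [[]|]; case: a4 => [[]|] => //= _;
case: c1 => [[]|]; case: c2 => [[]|]; case: c3 => [[]|]; case: c4 => [[]|] => //= _;
by case: b.
Qed.

Lemma P4_g a1 a2 a3 a4 : P4 a1 a2 a3 a4 ->
    ((a4 == red) + (a1 == red) <= (a2 == red) + (a3 == red))%N.
Proof.
by case: a1 => [[]|]; case: a2 => [[]|]; case: a3 => [[]|]; case: a4 => [[]|].
Qed.

Lemma P2_step a1 a2 a3 a4 c1 c2 c3 c4 b : P2 a1 a2 a3 a4 -> P2 c1 c2 c3 c4 ->
    P2 (stepc a1 b c1) (stepc a2 b c2) (stepc a3 b c3) (stepc a4 b c4).
Proof.
case/and3P => h12 /eqP -> /eqP ->; case/and3P => h12' /eqP -> /eqP ->.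
rewrite /P2 !eqxx andbT andbT.
by move: h12 h12'; case: a1 => [[]|]; case: a2 => [[]|];
   case: c1 => [[]|]; case: c2 => [[]|]; case: b.
Qed.

Lemma P2_g a1 a2 a3 a4 : P2 a1 a2 a3 a4 ->
    ((a4 == red) + (a1 == red) <= (a2 == red) + (a3 == red))%N.
Proof.
case/and3P => h /eqP -> /eqP ->.
by move: h; case: a1 => [[]|]; case: a2 => [[]|].
Qed.


Lemma stableP (X : state V) v w : stable E X -> X v == uncol -> E v w -> X w == uncol.
Proof.
move=> /forallP/(_ v)/forallP/(_ w) /implyP H hv hw; apply: H.
by rewrite hv hw.
Qed.

Lemma step_stable (X : state V) p : stable E X -> pick_prob R E p != 0 -> step E X p = X.
Proof.
move=> hX hp; apply/ffunP => v; rewrite step_app /stepc.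
case hv: (X v == uncol) => //=; case hd: (0 < outdeg E v)%N => //=.
by rewrite (stableP hX hv (pp_neq0 hp hd)).
Qed.

Lemma trans_stable (X : state V) : stable E X -> trans R E X X = 1.
Proof.
move=> hX; rewrite /trans -[RHS]sum_pp; apply: eq_bigr => p _.
case: (eqVneq (pick_prob R E p) 0) => [->|hp]; first by rewrite mul0r.
by rewrite step_stable // eqxx mulr1.
Qed.

Lemma dist_mono1 S t (X : state V) : stable E X -> dist R E S t X <= dist R E S t.+1 X.
Proof.
move=> hX.
have -> : dist R E S t.+1 X = \sum_Y dist R E S t Y * trans R E Y X by [].
rewrite (bigD1 X) //= trans_stable // mulr1 lerDl.
apply: sumr_ge0 => Y _; apply: mulr_ge0; [exact: dist_ge0|exact: trans_ge0].
Qed.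

Lemma dist_mono S (X : state V) : stable E X ->
  {homo (fun t => dist R E S t X) : n m / (n <= m)%N >-> n <= m}.
Proof. by move=> hX; apply/nondecreasing_seqP => t; exact: dist_mono1. Qed.

Lemma dist_le1 S t X : dist R E S t X <= 1.
Proof.
rewrite -(sum_dist S t) (bigD1 X) //= lerDl.
by apply: sumr_ge0 => Y _; exact: dist_ge0.
Qed.

Definition hs (X : state V) : R := (stable E X)%:R.
Definition hn (X : state V) : R := (~~ stable E X)%:R.

Lemma hsn S t : W hs t S + W hn t S = 1.
Proof.
rewrite /W -big_split /= -(sum_dist S t); apply: eq_bigr => X _.
by rewrite -mulrDr /hs /hn; case: (stable E X); rewrite ?addr0 ?add0r mulr1.
Qed.

Lemma W_ge0 g t S : (forall X, 0 <= g X) -> 0 <= W g t S.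
Proof.
move=> hg; apply: sumr_ge0 => X _; apply: mulr_ge0 => //; exact: dist_ge0.
Qed.

Lemma hn_ge0 X : 0 <= hn X. Proof. exact: ler0n. Qed.
Lemma hs_ge0 X : 0 <= hs X. Proof. exact: ler0n. Qed.

Lemma dist_self (X : state V) t : stable E X -> dist R E X t X = 1.
Proof.
move=> hX; apply/le_anti; rewrite dist_le1 /=.
have := dist_mono X hX (leq0n t); by rewrite /= eqxx.
Qed.

Lemma N_stable (X : state V) t : stable E X -> W hn t X = 0.
Proof.
move=> hX; apply/eqP; rewrite eq_le W_ge0 ?andbT; last exact: hn_ge0.
have h1 := dist_self t hX.
have := sum_dist X t; rewrite (bigD1 X) //= h1 => /eqP; rewrite -[X in _ == X]addr0 (inj_eq (addrI 1)) => /eqP h0.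
rewrite /W (bigD1 X) //= {1}/hn hX mulr0 add0r -[X in _ <= X]h0; apply: ler_sum => Y _.
rewrite -[X in _ <= X]mulr1; apply: ler_wpM2l; first exact: dist_ge0.
by rewrite /hn; case: (stable E Y).
Qed.


Definition nun (X : state V) := #|[set v | X v == uncol]|.
Definition q : R := (#|V|%:R)^-1.

Lemma q_ge0 : 0 <= q.
Proof. by rewrite /q invr_ge0 ler0n. Qed.

Lemma q_le1 : q <= 1.
Proof.
rewrite /q; case: #|V| => [|n]; first by rewrite invr0 ler01.
by rewrite invf_le1 ?ltr0Sn // ler1n.
Qed.

Lemma stable0 (X : state V) : nun X = 0%N -> stable E X.
Proof.
move=> /cards0_eq h0; apply/forallP => v; apply/forallP => w.
apply/implyP => /andP [hv _].
have : v \in [set v | X v == uncol] by rewrite inE.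
by rewrite h0 inE.
Qed.

Lemma nun_step (X : state V) (p : {ffun V -> V}) v : X v == uncol -> (0 < outdeg E v)%N ->
  X (p v) != uncol -> (nun (step E X p) < nun X)%N.
Proof.
move=> hv hd hw; apply: proper_card; apply/properP; split.
  apply/fintype.subsetP => x; rewrite !inE step_app /stepc.
  by case: ifP => [/andP [/andP [hx _] _] _ | _ ].
by exists v; rewrite !inE // step_app /stepc hv hd hw.
Qed.

Lemma marg v w : \sum_p pick_prob R E p * (p v == w)%:R = fac v w.
Proof.
have H : forall p : {ffun V -> V}, pick_prob R E p * (p v == w)%:R =
   \prod_u (fac u (p u) * (if u == v then ((p u == w)%:R) else 1)).
  move=> p; rewrite big_split /= -ppE; congr (_ * _).
  by rewrite (bigD1 v) //= eqxx big1 ?mulr1 // => u /negbTE ->.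
under eq_bigr do rewrite H.
rewrite -(bigA_distr_bigA (fun u j => fac u j * (if u == v then (j == w)%:R else 1))) /=.
rewrite (bigD1 v) //= [X in _ * X]big1 ?mulr1.
  rewrite eqxx; under eq_bigr do rewrite mulrC.
  exact: sum_eq1'.
move=> u /negbTE ->; under eq_bigr do rewrite mulr1.
exact: sum_fac.
Qed.

Lemma fac_ge_q v w : E v w -> q <= fac v w.
Proof.
move=> hw.
have hd : (0 < outdeg E v)%N by apply/card_gt0P; exists w; rewrite inE.
have hV : (0 < #|V|)%N by apply: leq_trans hd (max_card _).
rewrite /fac hd hw /q lef_pV2 ?posrE ?ltr0n // ler_nat.
exact: max_card.
Qed.

Lemma hs_stable X : stable E X -> hs X = 1.
Proof. by rewrite /hs => ->. Qed.

Lemma key t : forall X, (nun X <= t)%N -> q ^+ nun X <= W hs t X.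
Proof.
elim: t => [|t IH] X hu.
  have h0 : nun X = 0%N by apply/eqP; rewrite -leqn0.
  by rewrite W0 hs_stable ?stable0 // h0 expr0.
case hX: (stable E X).
  have := hsn X t.+1; rewrite N_stable // addr0 => ->.
  exact: exprn_ile1 q_ge0 q_le1.
move/negbT: hX; rewrite /stable negb_forall => /existsP [v].
rewrite negb_forall => /existsP [w]; rewrite negb_imply => /andP [/andP [hv hw] hx].
have hd : (0 < outdeg E v)%N by apply/card_gt0P; exists w; rewrite inE.
have hpos : (0 < nun X)%N by apply/card_gt0P; exists v; rewrite inE.
rewrite W_back.
apply: le_trans (_ : \sum_p pick_prob R E p * (p v == w)%:R * q ^+ (nun X).-1 <= _).
  rewrite -mulr_suml marg -{1}(prednK hpos) exprS.
  by apply: ler_wpM2r; [exact: exprn_ge0 q_ge0 | exact: fac_ge_q].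
apply: ler_sum => p _.
case: (eqVneq (p v) w) => [e|ne].
  rewrite /= mulr1; apply: ler_wpM2l; first exact: pp_ge0.
  have hlt : (nun (step E X p) < nun X)%N by apply: (nun_step hv hd); rewrite e.
  apply: le_trans (IH _ _).
    apply: ler_wiXn2l; [exact: q_ge0 | exact: q_le1 | ].
    by rewrite -ltnS (prednK hpos).
  by rewrite -ltnS; apply: leq_trans hlt hu.
rewrite /= mulr0 mul0r; apply: mulr_ge0; first exact: pp_ge0.
exact: W_ge0 hs_ge0.
Qed.


Lemma W_CK g t m S : W g (t + m) S = \sum_X dist R E S t X * W g m X.
Proof.
rewrite /W; under eq_bigr do rewrite dist_CK mulr_suml.
rewrite exchange_big /=; apply: eq_bigr => X _.
by rewrite mulr_sumr; apply: eq_bigr => Y _; rewrite mulrA.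
Qed.

Definition cc : R := 1 - q ^+ #|V|.

Lemma qn_gt0 : 0 < q ^+ #|V|.
Proof.
rewrite /q; case: #|V| => [|n]; first by rewrite expr0 ltr01.
by apply: exprn_gt0; rewrite invr_gt0 ltr0Sn.
Qed.

Lemma cc_ge0 : 0 <= cc.
Proof. by rewrite /cc subr_ge0 exprn_ile1 // ?q_ge0 ?q_le1. Qed.

Lemma cc_lt1 : `|cc| < 1.
Proof.
rewrite ger0_norm ?cc_ge0 // /cc ltrBlDr ltrDl; exact: qn_gt0.
Qed.

Lemma Nn_le X : W hn #|V| X <= cc * hn X.
Proof.
case hX: (stable E X).
  by rewrite N_stable // /hn hX mulr0.
rewrite /hn hX /= mulr1 /cc.
have := hsn X #|V|; move/(canRL (addKr (W hs #|V| X))) => ->.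
rewrite addrC lerD2l lerN2.
apply: le_trans (key (max_card _)).
apply: ler_wiXn2l; [exact: q_ge0 | exact: q_le1 | exact: max_card].
Qed.

Lemma N_decay t S : W hn (t + #|V|) S <= cc * W hn t S.
Proof.
rewrite W_CK /W mulr_sumr; apply: ler_sum => X _.
rewrite mulrCA; apply: ler_wpM2l; first exact: dist_ge0.
exact: Nn_le.
Qed.

Lemma N_geom k S : W hn (k * #|V|) S <= cc ^+ k.
Proof.
elim: k S => [|k IH] S.
  by rewrite mul0n W0 expr0 /hn; case: (stable E S).
rewrite mulSnr exprS; apply: le_trans (N_decay _ _) _.
by apply: ler_wpM2l; [exact: cc_ge0 | exact: IH].
Qed.


Lemma dist_cvg S X : stable E X -> cvgn (fun t => dist R E S t X).
Proof.
move=> hX; apply: cvgP (nondecreasing_cvgn (dist_mono S hX) _).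
by exists 1 => _ [t _ <-]; exact: dist_le1.
Qed.

Lemma L_ge S X t : stable E X -> dist R E S t X <= final_prob R E S X.
Proof.
move=> hX; exact: (nondecreasing_cvgn_le (dist_mono S hX) (dist_cvg (S:=S) hX) t).
Qed.

Lemma L_le S X t : stable E X -> final_prob R E S X <= dist R E S t X + W hn t S.
Proof.
move=> hX; apply: limr_le; first exact: dist_cvg.
near=> u.
have htu : (t <= u)%N by near: u; exact: nbhs_infty_ge.
have H1 : dist R E S u X - dist R E S t X <= W hs u S - W hs t S.
  rewrite /W -sumrB (bigD1 X) //= -mulrBl hs_stable // mulr1 lerDl.
  apply: sumr_ge0 => Y _; rewrite -mulrBl.
  case hY: (stable E Y); last by rewrite /hs hY mulr0.
  by apply: mulr_ge0; [rewrite subr_ge0; exact: dist_mono | exact: hs_ge0].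
have H2 := hsn S u; have H3 := hsn S t.
have H4 : 0 <= W hn u S by apply: W_ge0; exact: hn_ge0.
lra.
Unshelve. all: by end_near.
Qed.


Definition K : R := #|V|%:R * (#|{: state V}|%:R + 1).

Lemma gr_le X : gr X <= #|V|%:R.
Proof. by rewrite /gr ler_nat max_card. Qed.

Lemma gr_ge0 X : 0 <= gr X. Proof. exact: ler0n. Qed.

Lemma K_ge0 : 0 <= K.
Proof. by apply: mulr_ge0; [exact: ler0n | apply: addr_ge0; [exact: ler0n | exact: ler01]]. Qed.

Lemma V_le_K : #|V|%:R <= K.
Proof.
rewrite /K -{1}[#|V|%:R]mulr1; apply: ler_wpM2l; first exact: ler0n.
by rewrite lerDr ler0n.
Qed.

Lemma efr_up S t : expected_final_reds R E S <= W gr t S + K * W hn t S.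
Proof.
rewrite /expected_final_reds.
have H : \sum_(X | stable E X) #|reds X|%:R * final_prob R E S X <=
   \sum_(X | stable E X) (dist R E S t X * gr X + gr X * W hn t S).
  apply: ler_sum => X hX; rewrite (mulrC (dist _ _ _ _ _)) -mulrDr.
  by apply: ler_wpM2l; [exact: gr_ge0 | exact: L_le].
apply: (le_trans H).
rewrite big_split /=; apply: lerD.
  rewrite /W [X in _ <= X](bigID (fun X => stable E X)) /= lerDl.
  by apply: sumr_ge0 => X _; apply: mulr_ge0; [exact: dist_ge0 | exact: gr_ge0].
rewrite -mulr_suml mulrC [K * _]mulrC; apply: ler_wpM2l; first by apply: W_ge0; exact: hn_ge0.
have H1 : \sum_(X | stable E X) gr X <= \sum_X gr X.
  rewrite [X in _ <= X](bigID (fun X => stable E X)) /= lerDl.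
  by apply: sumr_ge0 => X _; exact: gr_ge0.
apply: (le_trans H1).
have H2 : \sum_X gr X <= \sum_(X : state V) (#|V|%:R : R).
  by apply: ler_sum => X _; exact: gr_le.
apply: (le_trans H2).
rewrite sumr_const -[_ *+ #|_|]mulr_natr /K; apply: ler_wpM2l; first exact: ler0n.
rewrite -[X in X <= _]addr0; apply: lerD; [exact: lexx | exact: ler01].
Qed.

Lemma efr_low S t : W gr t S <= expected_final_reds R E S + K * W hn t S.
Proof.
rewrite /W (bigID (fun X => stable E X)) /=; apply: lerD.
  apply: ler_sum => X hX; rewrite mulrC; apply: ler_wpM2l; first exact: gr_ge0.
  exact: L_ge.
have -> : \sum_X dist R E S t X * hn X = \sum_(X | ~~ stable E X) dist R E S t X.
  rewrite (bigID (fun X => stable E X)) /= big1 ?add0r.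
    by apply: eq_bigr => X /negbTE hX; rewrite /hn hX mulr1.
  by move=> X hX; rewrite /hn hX mulr0.
have H : \sum_(X | ~~ stable E X) dist R E S t X * gr X <=
    #|V|%:R * \sum_(X | ~~ stable E X) dist R E S t X.
  rewrite mulr_sumr; apply: ler_sum => X _; rewrite mulrC.
  by apply: ler_wpM2r; [exact: dist_ge0 | exact: gr_le].
apply: (le_trans H).
apply: ler_wpM2r; last exact: V_le_K.
by apply: sumr_ge0 => X _; exact: dist_ge0.
Qed.

Lemma le0_geom (x C : R) : (forall k, x <= C * cc ^+ k) -> x <= 0.
Proof.
move=> H; apply: (cvgr_to_ge (cvg_geometric C cc_lt1)).
by apply: nearW => k; exact: H.
Qed.

End Proofs.
Unset Implicit Arguments.
Set Strict Implicit.

Theorem theorem2p2 (R : realType) (V : finType) (E : rel V) (S : state V) :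
  (forall v, S v != red) ->
  (forall (A : {set V}) (v : V),
      A \subset ~: blues S -> v \notin blues S ->
      F R E S A <= F R E S (v |: A)) /\
  (forall (A A' : {set V}) (v : V),
      A \subset A' -> A' \subset ~: blues S -> v \notin blues S ->
      F R E S (v |: A') - F R E S A' <= F R E S (v |: A) - F R E S A).
Proof.
move=> hS.
have notin : forall (B : {set V}) x, B \subset ~: blues S -> S x == blue -> x \notin B.
  move=> B x hB hx; apply/negP => hxB.
  by have := fintype.subsetP hB x hxB; rewrite !inE hx.
have neqv : forall v x, v \notin blues S -> S x == blue -> (x == v) = false.
  move=> v x hv hx; apply/negP => /eqP e; move: hv; rewrite inE -e hx.
  by [].
have KC := K_ge0 R V.
split.
  move=> A v hA hv; rewrite /F.
  set S1 := recolor_red S A; set S2 := recolor_red S (v |: A).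
  have HP : forall x, P2 (S1 x) (S2 x) (S1 x) (S1 x).
    move=> x; rewrite /P2 !eqxx !andbT /S1 /S2 !ffunE in_setU1.
    case hx: (S x) (hS x) => [[]|] // _.
      by rewrite (negbTE (notin _ _ hA (introT eqP hx))) (neqv _ _ hv (introT eqP hx)).
    by case: (x == v); case: (x \in A).
  suff : expected_final_reds R E S1 - expected_final_reds R E S2 <= 0 by rewrite subr_le0.
  apply: (@le0_geom R V _ (2 * K R V)) => k.
  set t := (k * #|V|)%N.
  have H1 := efr_up R E S1 t.
  have H2 := efr_low R E S2 t.
  have H3 := W_inv R E P2_step P2_g t HP.
  have N1 := ler_wpM2l KC (N_geom R E k S1).
  have N2 := ler_wpM2l KC (N_geom R E k S2).
  lra.
move=> A A' v hAA hA' hv; rewrite /F.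
have hA : A \subset ~: blues S by apply: fintype.subset_trans hAA hA'.
set S1 := recolor_red S A; set S2 := recolor_red S (v |: A).
set S3 := recolor_red S A'; set S4 := recolor_red S (v |: A').
have HP : forall x, P4 (S1 x) (S2 x) (S3 x) (S4 x).
  move=> x; rewrite /S1 /S2 /S3 /S4 !ffunE !in_setU1.
  case hx: (S x) (hS x) => [[]|] // _.
    by rewrite (negbTE (notin _ _ hA (introT eqP hx))) (negbTE (notin _ _ hA' (introT eqP hx))) (neqv _ _ hv (introT eqP hx)).
  have := fintype.subsetP hAA x.
  by case: (x == v); case: (x \in A); case: (x \in A') => // /(_ isT).
suff : expected_final_reds R E S4 - expected_final_reds R E S3 -
  (expected_final_reds R E S2 - expected_final_reds R E S1) <= 0 by rewrite subr_le0.
apply: (@le0_geom R V _ (4 * K R V)) => k.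
set t := (k * #|V|)%N.
have H1 := efr_up R E S1 t.
have H2 := efr_low R E S2 t.
have H3 := efr_low R E S3 t.
have H4 := efr_up R E S4 t.
have H5 := W_inv R E P4_step P4_g t HP.
have N1 := ler_wpM2l KC (N_geom R E k S1).
have N2 := ler_wpM2l KC (N_geom R E k S2).
have N3 := ler_wpM2l KC (N_geom R E k S3).
have N4 := ler_wpM2l KC (N_geom R E k S4).
lra.
Qed.
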